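(* Let $G$ be a finite simple graph on $[d]$. Then $K_G=\langle [I_G]_2\rangle+M_G$.
   Context: A stable set of $G$ is a subset of $[d]$ with no edge of $G$ (including $\emptyset$ and singletons); $S(G)$ is the set of stable sets; $R[G]=\mathbb{K}[x_S : S\in S(G)]$ over a field $\mathbb{K}$, all variables of degree $1$. $I_G$ is the kernel of $\pi:R[G]\to\mathbb{K}[t_1,\dots,t_d,s]$, $\pi(x_S)=s\prod_{j\in S}t_j$; $\langle [I_G]_2\rangle$ is the ideal generated by the degree-$2$ homogeneous elements of $I_G$. $J_G$ is the ideal generated by all $x_{S_1}x_{S_2}-x_{S_3}x_{S_4}$ with $S_i\in S(G)$, $S_1\cap S_2=S_3\cap S_4=\emptyset$, $S_1\cup S_2=S_3\cup S_4$. $M_G=\langle x_Sx_T : S,T\in S(G),\ S\cap T\neq\emptyset\rangle$ and $K_G=J_G+M_G$. *)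

(* Defs.v *)
From HB Require Import structures.
From mathcomp Require Import all_boot all_order all_algebra.
From mathcomp Require Import mpoly.

Set Implicit Arguments.
Unset Strict Implicit.
Unset Printing Implicit Defensive.

Import GRing.Theory.
Local Open Scope ring_scope.

(* A graph on [d] = 'I_d is given by an edge relation e (assumed symmetric
   and irreflexive in the theorem: a finite simple graph). *)

Definition stable (d : nat) (e : rel 'I_d) (S : {set 'I_d}) : bool :=
  [forall i in S, forall j in S, ~~ e i j].

Definition stab_sets (d : nat) (e : rel 'I_d) : {set {set 'I_d}} :=
  [set S | stable e S].

Definition nvars (d : nat) (e : rel 'I_d) : nat := #|stab_sets e|.

(* R[G] = K[x_S : S in S(G)], the variable 'X_i corresponding to the
   stable set [stS e i]. *)
Definition RG (K : fieldType) (d : nat) (e : rel 'I_d) := {mpoly K[nvars e]}.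

Definition stS (d : nat) (e : rel 'I_d) (i : 'I_(nvars e)) : {set 'I_d} :=
  enum_val i.

(* Target ring K[t_1,...,t_d,s] = {mpoly K[d.+1]}: t_j is the variable
   (widen_ord _ j) for j : 'I_d, and s is the last variable ord_max. *)
Definition tvar (K : fieldType) (d : nat) (j : 'I_d) : {mpoly K[d.+1]} :=
  'X_(widen_ord (leqnSn d) j).
Definition svar (K : fieldType) (d : nat) : {mpoly K[d.+1]} := 'X_(@ord_max d).

Definition pi_img (K : fieldType) (d : nat) (e : rel 'I_d) (i : 'I_(nvars e))
  : {mpoly K[d.+1]} :=
  svar K d * \prod_(j in stS i) tvar K j.

Definition piG (K : fieldType) (d : nat) (e : rel 'I_d) (p : RG K e)
  : {mpoly K[d.+1]} :=
  p \mPo [tuple pi_img K i | i < nvars e].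

Definition IG (K : fieldType) (d : nat) (e : rel 'I_d) (p : RG K e) : Prop :=
  piG p = 0.

Definition ideal_gen (R : comPzRingType) (P : R -> Prop) (p : R) : Prop :=
  exists s : seq (R * R), (forall q, q \in s -> P q.2) /\
                          p = \sum_(q <- s) q.1 * q.2.

Definition ideal_add (R : comPzRingType) (I J : R -> Prop) (p : R) : Prop :=
  exists a b, I a /\ J b /\ p = a + b.

Definition IG2gen (K : fieldType) (d : nat) (e : rel 'I_d) (p : RG K e) : Prop :=
  p \is 2.-homog /\ IG p.

Definition JGgen (K : fieldType) (d : nat) (e : rel 'I_d) (p : RG K e) : Prop :=
  exists i1 i2 i3 i4 : 'I_(nvars e),
    [/\ stS i1 :&: stS i2 = set0, stS i3 :&: stS i4 = set0,
        stS i1 :|: stS i2 = stS i3 :|: stS i4 &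
        p = 'X_i1 * 'X_i2 - 'X_i3 * 'X_i4].

Definition MGgen (K : fieldType) (d : nat) (e : rel 'I_d) (p : RG K e) : Prop :=
  exists i j : 'I_(nvars e), stS i :&: stS j != set0 /\ p = 'X_i * 'X_j.

Definition JG K d e := ideal_gen (@JGgen K d e).
Definition MG K d e := ideal_gen (@MGgen K d e).
Definition KG K d e := ideal_add (@JG K d e) (@MG K d e).
Definition IG2ideal K d e := ideal_gen (@IG2gen K d e).

(* Main.v *)
Require Import Defs.
From mathcomp Require Import all_boot all_order all_algebra.
From mathcomp Require Import mpoly.

Set Implicit Arguments.
Unset Strict Implicit.
Unset Printing Implicit Defensive.
Import GRing.Theory.
Local Open Scope ring_scope.

Section Ideals.
Variable R : comPzRingType.
Implicit Types (P Q : R -> Prop) (a b : R).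

Lemma ig0 P : ideal_gen P 0.
Proof. by exists [::]; split => //; rewrite big_nil. Qed.

Lemma igD P a b : ideal_gen P a -> ideal_gen P b -> ideal_gen P (a + b).
Proof.
move=> [s1 [h1 ->]] [s2 [h2 ->]]; exists (s1 ++ s2); split; last by rewrite big_cat.
by move=> q; rewrite mem_cat => /orP [/h1|/h2].
Qed.

Lemma igM P r a : ideal_gen P a -> ideal_gen P (r * a).
Proof.
move=> [s [h ->]]; exists [seq (r * q.1, q.2) | q <- s]; split.
  by move=> q /mapP [q' /h ? ->].
by rewrite big_map mulr_sumr; apply: eq_bigr => q _; rewrite mulrA.
Qed.

Lemma ig1 P a : P a -> ideal_gen P a.
Proof. by move=> Pa; exists [:: (1, a)]; split; [move=> q; rewrite inE => /eqP ->|rewrite big_seq1 mul1r]. Qed.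

Lemma ig_mono P Q a : (forall x, P x -> Q x) -> ideal_gen P a -> ideal_gen Q a.
Proof. by move=> PQ [s [h ->]]; exists s; split => // q /h /PQ. Qed.

Lemma ia0 P Q : ideal_add (ideal_gen P) (ideal_gen Q) 0.
Proof. by exists 0, 0; split; [apply: ig0|split; [apply: ig0|rewrite addr0]]. Qed.

Lemma iaD P Q a b : ideal_add (ideal_gen P) (ideal_gen Q) a ->
  ideal_add (ideal_gen P) (ideal_gen Q) b ->
  ideal_add (ideal_gen P) (ideal_gen Q) (a + b).
Proof.
move=> [a1 [a2 [h1 [h2 ->]]]] [b1 [b2 [g1 [g2 ->]]]].
exists (a1 + b1), (a2 + b2); split; first exact: igD.
by split; [exact: igD|rewrite addrACA].
Qed.

Lemma iaM P Q r a : ideal_add (ideal_gen P) (ideal_gen Q) a ->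
  ideal_add (ideal_gen P) (ideal_gen Q) (r * a).
Proof.
move=> [a1 [a2 [h1 [h2 ->]]]]; exists (r * a1), (r * a2); split; first exact: igM.
by split; [exact: igM|rewrite mulrDr].
Qed.

Lemma ia_gen P Q a : ideal_gen (ideal_add (ideal_gen P) (ideal_gen Q)) a ->
  ideal_add (ideal_gen P) (ideal_gen Q) a.
Proof.
move=> [s [h ->]]; elim: s h => [|q s IH] h; first by rewrite big_nil; apply: ia0.
rewrite big_cons; apply: iaD; first by apply: iaM; apply: h; rewrite inE eqxx.
by apply: IH => x xs; apply: h; rewrite inE xs orbT.
Qed.

Lemma iaL P Q a : ideal_gen P a -> ideal_add (ideal_gen P) (ideal_gen Q) a.
Proof. by move=> h; exists a, 0; split => //; split; [apply: ig0|rewrite addr0]. Qed.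

Lemma iaR P Q a : ideal_gen Q a -> ideal_add (ideal_gen P) (ideal_gen Q) a.
Proof. by move=> h; exists 0, a; split; [apply: ig0|split => //; rewrite add0r]. Qed.

End Ideals.
Local Open Scope ring_scope.

Section Poly.
Variables (K : fieldType) (d : nat) (e : rel 'I_d).
Local Notation n := (nvars e).
Local Notation wd := (widen_ord (leqnSn d)).

Definition nu (i : 'I_n) : 'X_{1..d.+1} :=
  (U_(@ord_max d) + \sum_(j in stS i) U_(wd j))%MM.

Definition pimon (m : 'X_{1..n}) : 'X_{1..d.+1} :=
  (\sum_(k < n) (nu k *+ m k))%MM.

Lemma mpolyX_sum (I : Type) (r : seq I) (P : pred I) (F : I -> 'X_{1..d.+1}) :
  \prod_(i <- r | P i) ('X_[F i] : {mpoly K[d.+1]}) = 'X_[\sum_(i <- r | P i) F i]%MM.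
Proof.
by rewrite (big_morph (@mpolyX _ K) (@mpolyXD _ K) (@mpolyX0 _ K)).
Qed.

Lemma pi_imgE i : pi_img K i = 'X_[nu i].
Proof.
by rewrite /pi_img /svar /tvar /nu mpolyXD mpolyX_sum.
Qed.

Lemma nu_wd i x : nu i (wd x) = (x \in stS i).
Proof.
rewrite /nu mnmDE mnm1E mnm_sumE.
have -> : (ord_max == wd x) = false.
  by apply/negbTE; rewrite neq_ltn /= ltn_ord orbT.
rewrite add0n.
have E : forall j, (U_(wd j)%MM (wd x) = (j == x) :> nat).
  by move=> j; rewrite mnm1E.
rewrite (eq_bigr _ (fun j _ => E j)).
case: (boolP (x \in stS i)) => xS.
  rewrite (bigD1 x) //= eqxx big1 // => j /andP [_ /negbTE ->] //.
by rewrite big1 // => j jS; case: eqP => // ejx; rewrite -ejx jS in xS.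
Qed.

Lemma piGX m : piG ('X_[m] : RG K e) = 'X_[pimon m].
Proof.
rewrite /piG comp_mpolyX /pimon -mpolyX_sum.
by apply: eq_bigr => k _; rewrite tnth_mktuple pi_imgE mpolyXn.
Qed.

Lemma piGXU i : piG ('X_i : RG K e) = pi_img K i.
Proof. by rewrite /piG comp_mpolyXU -tnth_nth tnth_mktuple. Qed.

Lemma mpolyX_inj (m1 m2 : 'X_{1..d.+1}) :
  ('X_[m1] : {mpoly K[d.+1]}) = 'X_[m2] -> m1 = m2.
Proof.
move=> h; have := mcoeffX K m1 m2; rewrite h mcoeffX eqxx.
by case: eqP => // _ /eqP; rewrite oner_eq0.
Qed.

Lemma pimon2 i j : pimon (U_(i) + U_(j))%MM = (nu i + nu j)%MM.
Proof.
apply: mpolyX_inj; rewrite -piGX mpolyXD /piG rmorphM /=.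
by rewrite -!/(piG _) !piGXU !pi_imgE -mpolyXD.
Qed.

Lemma deg2P (m : 'X_{1..n}) : mdeg m = 2%N -> exists i j, m = (U_(i) + U_(j))%MM.
Proof.
move=> dm.
case: (pickP (fun i => 0 < m i)%N) => [i mi|none]; last first.
  have : m = 0%MM by apply/mnmP => i; rewrite mnm0E; have := none i; case: (m i).
  by move=> m0; rewrite m0 mdeg0 in dm.
have le : (U_(i) <= m)%MM by rewrite lep1mP -lt0n.
have d1 : mdeg (m - U_(i))%MM = 1%N.
  by have := mdegD (m - U_(i))%MM U_(i); rewrite submK // mdeg1 dm addn1 => -[].
have /mdeg1P [j /eqP ej] : mdeg (m - U_(i))%MM == 1%N by rewrite d1.
by exists j, i; rewrite -ej submK.
Qed.


Lemma JG_IG2 (p : RG K e) : JGgen p -> IG2gen p.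
Proof.
move=> [i1 [i2 [i3 [i4 [h12 h34 hU ->]]]]]; split.
  have hX : forall i j : 'I_n, ('X_i * 'X_j : RG K e) \is 2.-homog.
    by move=> i j; rewrite (_ : 2 = 1 + 1)%N // dhomogM // dhomogX /= mdeg1.
  by apply: rpredB.
rewrite /IG /piG rmorphB !rmorphM /= -!/(piG _) !piGXU /pi_img.
rewrite mulrACA [in X in _ - X]mulrACA -!bigU -?setI_eq0 ?h12 ?h34 //.
rewrite (eq_bigl (fun x => x \in stS i1 :|: stS i2)); last by move=> x; rewrite !inE.
rewrite [in X in _ - X](eq_bigl (fun x => x \in stS i3 :|: stS i4)); last by move=> x; rewrite !inE.
by rewrite hU subrr.
Qed.

Lemma piG_coef (p : RG K e) mu :
  (piG p)@_mu = \sum_(m <- msupp p) p@_m * (pimon m == mu)%:R.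
Proof.
rewrite /piG comp_mpolyEX (raddf_sum (mcoeff _)); apply: eq_bigr => m _.
by rewrite /= mcoeffZ -/(piG _) piGX mcoeffX.
Qed.

Definition good (mu : 'X_{1..d.+1}) := [forall x : 'I_d, (mu (wd x) <= 1)%N].

Lemma pimon2_wd i j x :
  pimon (U_(i) + U_(j))%MM (wd x) = ((x \in stS i) + (x \in stS j))%N.
Proof. by rewrite pimon2 mnmDE !nu_wd. Qed.

Lemma bad_M i j : ~~ good (pimon (U_(i) + U_(j))%MM) -> stS i :&: stS j != set0.
Proof.
move=> /forallPn [x]; rewrite pimon2_wd => hx; apply/set0Pn; exists x.
by rewrite inE; move: hx; case: (x \in stS i); case: (x \in stS j).
Qed.

Lemma good_J i j k l : good (pimon (U_(i) + U_(j))%MM) ->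
  pimon (U_(i) + U_(j))%MM = pimon (U_(k) + U_(l))%MM ->
  JGgen ('X_i * 'X_j - 'X_k * 'X_l : RG K e).
Proof.
move=> /forallP g E; exists i, j, k, l; split => //.
- apply/setP => x; rewrite inE in_set0; have := g x; rewrite pimon2_wd.
  by case: (x \in stS i); case: (x \in stS j).
- apply/setP => x; rewrite inE in_set0; have := g x; rewrite E pimon2_wd.
  by case: (x \in stS k); case: (x \in stS l).
- apply/setP => x; rewrite !inE; have := congr1 (fun m : 'X_{1..d.+1} => m (wd x)) E.
  rewrite /= !pimon2_wd.
  by case: (x \in stS i); case: (x \in stS j); case: (x \in stS k); case: (x \in stS l).
Qed.


Lemma ig_sum (P : RG K e -> Prop) (s : seq 'X_{1..n}) (F : 'X_{1..n} -> RG K e) :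
  (forall m, m \in s -> ideal_gen P (F m)) -> ideal_gen P (\sum_(m <- s) F m).
Proof.
elim: s => [|x s IH] h; first by rewrite big_nil; apply: ig0.
rewrite big_cons; apply: igD; first by apply: h; rewrite inE eqxx.
by apply: IH => y ys; apply: h; rewrite inE ys orbT.
Qed.

Lemma key_ind (N : nat) (p : RG K e) : (size (msupp p) <= N)%N ->
  p \is 2.-homog -> piG p = 0 -> KG p.
Proof.
elim: N p => [|N IH] p hs hh hk.
  have -> : p = 0 by rewrite [p]mpolyE; move: hs; case: (msupp p) => // _; rewrite big_nil.
  exact: ia0.
case: (boolP (has (fun m => good (pimon m)) (msupp p))); last first.
  move/hasPn => hb; apply: iaR; rewrite [p]mpolyE; apply: ig_sum => m ms.
  have dm : mdeg m = 2%N by apply: (dhomog_mf hh ms).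
  have [i [j Em]] := deg2P dm.
  rewrite -mul_mpolyC Em mpolyXD; apply: igM; apply: ig1; exists i, j; split => //.
  by apply: bad_M; rewrite -Em; apply: hb.
case/hasP => m ms gm.
have dm : mdeg m = 2%N by apply: (dhomog_mf hh ms).
have [i [j Em]] := deg2P dm.
have [m' ms' /andP [nm' epi]] : exists2 m', m' \in msupp p & (m' != m) && (pimon m' == pimon m).
  apply/hasP; apply/negPn/negP => /hasPn hn.
  have := piG_coef p (pimon m); rewrite hk mcoeff0 (bigD1_seq m) ?msupp_uniq //= eqxx mulr1.
  rewrite big1 ?addr0; last first.
    move=> k kn; case: (boolP (k \in msupp p)) => kS.
      have := hn k kS; rewrite negb_and kn /= => /negbTE ->; by rewrite mulr0.
    by move: kS; rewrite mcoeff_msupp negbK => /eqP ->; rewrite mul0r.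
  by move=> /esym /eqP; rewrite mcoeff_eq0 ms.
have dm' : mdeg m' = 2%N by apply: (dhomog_mf hh ms').
have [k [l Em']] := deg2P dm'.
set c := p@_m.
have Jg : JGgen ('X_[m] - 'X_[m'] : RG K e).
  rewrite Em Em' !mpolyXD; apply: good_J; rewrite -?Em -?Em' //; exact/esym/eqP.
have [hg kg] := JG_IG2 Jg.
set q := c *: ('X_[m] - 'X_[m'] : RG K e).
have -> : p = (p - q) + q by rewrite subrK.
apply: iaD; last by apply: iaL; rewrite /q -mul_mpolyC; apply: igM; apply: ig1.
apply: IH.
- have uq := msupp_uniq (p - q).
  have sub : {subset msupp (p - q) <= rem m (msupp p)}.
    move=> x; rewrite mcoeff_msupp mcoeffB /q mcoeffZ mcoeffB !mcoeffX => hx.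
    rewrite mem_rem_uniq ?msupp_uniq // inE; apply/andP; split.
      by apply: contraNneq hx => ->; rewrite eqxx eq_sym (negbTE nm') subr0 mulr1 subrr.
    rewrite mcoeff_msupp; apply: contraNneq hx => hpx.
    have -> : (m == x) = false by apply: contraTF ms => /eqP ->; rewrite mcoeff_msupp hpx eqxx.
    have -> : (m' == x) = false by apply: contraTF ms' => /eqP ->; rewrite mcoeff_msupp hpx eqxx.
    by rewrite hpx subrr mulr0 subrr.
  apply: leq_trans (uniq_leq_size uq sub) _.
  by rewrite size_rem // -subn1 leq_subLR add1n.
- by apply: rpredB => //; apply: rpredZ.
- rewrite /piG raddfB /= -!/(piG _) hk /q -mul_mpolyC /piG rmorphM /= -/(piG _).
  by move: kg; rewrite /IG /piG => ->; rewrite mulr0 subr0.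
Qed.

End Poly.

Theorem corollary6p2 (K : fieldType) (d : nat) (e : rel 'I_d) :
  (forall x y, e x y = e y x) -> (forall x, ~~ e x x) ->
  forall p : RG K e, KG p <-> ideal_add (@IG2ideal K d e) (@MG K d e) p.
Proof.
move=> _ _ p; split.
  move=> [a [b [ha [hb ->]]]]; exists a, b; split => //.
  by apply: (ig_mono (@JG_IG2 K d e)).
move=> [a [b [ha [hb ->]]]]; apply: iaD; last exact: iaR.
apply: ia_gen; apply: (ig_mono _ ha) => x [hx kx].
exact: (@key_ind K d e (size (msupp x)) x (leqnn _) hx kx).
Qed.
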